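(* For all nonnegative integers $n$ and $r$ with $n\geqslant\lceil r/2\rceil+1$, $$m\!\left(K_n^2, r\right)=\left\lfloor\frac{(r+1)^2}{4}\right\rfloor.$$
   Context: All graphs are finite, simple and undirected. For a nonnegative integer $r$ and a graph $G$, the $r$-neighbor bootstrap percolation process on $G$ starts with a set $A_0\subseteq V(G)$ of initially active vertices, and for $i\geqslant 1$, $A_i=A_{i-1}\cup\{v\in V(G) : |N(v)\cap A_{i-1}|\geqslant r\}$, where $N(v)$ is the set of neighbors of $v$. The set $A_0$ is a percolating set if $\bigcup_{i\geqslant 0}A_i=V(G)$. $m(G,r)$ denotes the minimum size of a percolating set of $G$ in the $r$-neighbor bootstrap percolation process. $K_n^2=K_n\square K_n$ is the graph with vertex set $\{0,\ldots,n-1\}^2$ in which two vertices are adjacent iff they differ in exactly one coordinate. *)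

(* Defs.v *)
From mathcomp Require Import all_boot.
Set Implicit Arguments. Unset Strict Implicit. Unset Printing Implicit Defensive.

Section Bootstrap.
Variables (T : finType) (e : rel T) (r : nat).

Definition nbhd (v : T) : {set T} := [set u | e v u].

Definition bp_step (A : {set T}) : {set T} :=
  A :|: [set v | r <= #|nbhd v :&: A|].

Definition bp_iter (i : nat) (A0 : {set T}) : {set T} := iter i bp_step A0.

Definition percolating (A0 : {set T}) : Prop :=
  forall v : T, exists i, v \in bp_iter i A0.

Definition is_m_perc (k : nat) : Prop :=
  (exists A0 : {set T}, percolating A0 /\ #|A0| = k) /\
  (forall A0 : {set T}, percolating A0 -> k <= #|A0|).
End Bootstrap.

(* K_n^2 = K_n □ K_n on {0..n-1}^2: adjacent iff they differ in exactly one coordinate *)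
Definition rook_adj (n : nat) : rel ('I_n * 'I_n) :=
  fun x y => ((x.1 != y.1) && (x.2 == y.2)) || ((x.1 == y.1) && (x.2 != y.2)).
Arguments rook_adj : clear implicits.

(* Main.v *)
Require Import Defs.
From mathcomp Require Import all_boot.
From mathcomp Require Import zify.

Lemma card_setE (n : nat) (P : pred 'I_n) :
  #|[set x | P x]| = \sum_(x < n) (P x : nat).
Proof.
rewrite -sum1_card big_mkcond /=; apply: eq_bigr => x _.
by rewrite inE; case: (P x).
Qed.

Lemma sum_lt n c : \sum_(x < n) ((x < c) : nat) = minn c n.
Proof.
elim: n => [|n IH]; first by rewrite big_ord0 minn0.
rewrite big_ord_recr /= IH; case: (ltnP n c) => h /=; lia.
Qed.

Lemma sum_ge n c : \sum_(x < n) ((c <= x) : nat) = n - c.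
Proof.
elim: n => [|n IH]; first by rewrite big_ord0.
rewrite big_ord_recr /= IH; case: (leqP c n) => h /=; lia.
Qed.

Lemma tri1 n a : a <= n -> (\sum_(i < n) (a - i)).*2 = a * a.+1.
Proof.
elim: a => [|a IH] h.
  by rewrite big1 // => i _; rewrite sub0n.
have -> : \sum_(i < n) (a.+1 - i) = \sum_(i < n) (a - i) + \sum_(i < n) ((i < a.+1) : nat).
  rewrite -big_split /=; apply: eq_bigr => i _.
  case: (ltnP i a.+1) => hi /=; lia.
rewrite sum_lt doubleD IH; last by lia.
have -> : minn a.+1 n = a.+1 by lia.
nia.
Qed.

Lemma tri2 n b : b < n -> (\sum_(i < n) (i + b.+1 - n)).*2 = b * b.+1.
Proof.
move=> hb.
rewrite (reindex_inj rev_ord_inj) /=.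
rewrite -(@tri1 n b); last by lia.
congr (_.*2); apply: eq_bigr => i _.
have := ltn_ord i; lia.
Qed.

Section Gen.
Variables (T : finType) (e : rel T) (r : nat).

Lemma iter_sub (A : {set T}) i : A \subset bp_iter e r i A.
Proof.
elim: i => [|i IH]; first exact: subxx.
rewrite /bp_iter /= /bp_step.
exact: subset_trans IH (subsetUl _ _).
Qed.

End Gen.

Definition Acon (n r : nat) : {set 'I_n * 'I_n} :=
  [set u : 'I_n * 'I_n | (u.1 + u.2 < uphalf r) || (2 * n <= u.1 + u.2 + r./2 + 1)].

Lemma hab r : uphalf r + r./2 = r.
Proof. rewrite uphalf_half. have := odd_double_half r. lia. Qed.

Lemma ord_neq n (x y : 'I_n) : (val x < val y) || (val y < val x) -> x != y.
Proof. by move=> h; rewrite -val_eqE /= neq_ltn. Qed.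

Lemma key n r (v : 'I_n * 'I_n) : uphalf r < n -> v \notin Acon n r ->
  r <= #|nbhd (rook_adj n) v :&:
          (Acon n r :|: [set u : 'I_n * 'I_n | u.1 + (n - u.2) < v.1 + (n - v.2)])|.
Proof.
case: v => i j hn; rewrite inE negb_or -leqNgt -ltnNge /= => /andP [h1 h2].
have hr := hab r.
set a := uphalf r in hn h1 hr *; set b := r./2 in h2 hr *.
have hi := ltn_ord i; have hj := ltn_ord j.
set I1 := [set x : 'I_n | (x < a - i) || (j < x)].
set I2 := [set x : 'I_n | (x < i) || (2 * n <= x + j + b + 1)].
set S1 := [set (i, x) | x in I1].
set S2 := [set (x, j) | x in I2].
have sub : S1 :|: S2 \subset nbhd (rook_adj n) (i, j) :&:
    (Acon n r :|: [set u : 'I_n * 'I_n | u.1 + (n - u.2) < i + (n - j)]).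
  apply/subsetP => u; rewrite inE => /orP [] /imsetP [x Hx ->];
    rewrite inE in Hx; have hx := ltn_ord x;
    rewrite !inE /rook_adj /= ?eqxx /=.
  - case/orP: Hx => h.
    + rewrite ord_neq /=; last by apply/orP; right; lia.
      by apply/orP; left; apply/orP; left; lia.
    + rewrite ord_neq /=; last by apply/orP; left; lia.
      by apply/orP; right; lia.
  - case/orP: Hx => h.
    + rewrite ord_neq /=; last by apply/orP; right; lia.
      by apply/orP; right; lia.
    + rewrite ord_neq /=; last by apply/orP; left; lia.
      by apply/orP; left; apply/orP; right; lia.
apply: leq_trans (subset_leq_card sub).
have disj : S1 :&: S2 = set0.
  apply/setP => u; rewrite !inE; apply/negP => /andP [].
  move=> /imsetP [x Hx ->] /imsetP [y Hy [E1 E2]].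
  rewrite inE in Hx; move: Hx; rewrite E2.
  case/orP => h; lia.
rewrite cardsU disj cards0 subn0.
rewrite /S1 /S2 !card_imset; last first.
- by move=> x y [].
- by move=> x y [].
rewrite /I1 /I2 !card_setE.
have -> : \sum_(x < n) (((x < a - i) || (j < x)) : nat) =
          \sum_(x < n) ((x < a - i) : nat) + \sum_(x < n) ((j.+1 <= x) : nat).
  rewrite -big_split /=; apply: eq_bigr => x _.
  by case: (ltnP x (a - i)) => ?; case: (ltnP j x) => ? /=; lia.
have -> : \sum_(x < n) (((x < i) || (2 * n <= x + j + b + 1)) : nat) =
          \sum_(x < n) ((x < i) : nat) + \sum_(x < n) ((2 * n - j - b - 1 <= x) : nat).
  rewrite -big_split /=; apply: eq_bigr => x _.
  by case: (ltnP x i) => ?; case: (leqP (2 * n) (x + j + b + 1)) => ?;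
     case: (leqP (2 * n - j - b - 1) x) => ? /=; lia.
rewrite !sum_lt !sum_ge.
lia.
Qed.

Lemma perc_con n r : uphalf r < n -> percolating (rook_adj n) r (Acon n r).
Proof.
move=> hn.
suff H : forall N (v : 'I_n * 'I_n), v.1 + (n - v.2) < N ->
    v \in bp_iter (rook_adj n) r N (Acon n r).
  by move=> v; exists (v.1 + (n - v.2)).+1; apply: H.
elim=> [|N IH] v hv //.
have [vA|vA] := boolP (v \in Acon n r).
  exact: (subsetP (@iter_sub _ (rook_adj n) r (Acon n r) _)) vA.
rewrite /bp_iter iterS -/(bp_iter _ _ N _) /bp_step inE; apply/orP; right.
rewrite inE.
apply: leq_trans (@key _ _ _ hn vA) _.
apply: subset_leq_card; apply: setIS.
apply/subsetP => u; rewrite in_setU => /orP [uA|uv].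
  exact: (subsetP (@iter_sub _ (rook_adj n) r (Acon n r) _) _ uA).
rewrite inE in uv; apply: IH; lia.
Qed.

Lemma card_con n r : uphalf r < n -> #|Acon n r| = (r.+1 ^ 2) %/ 4.
Proof.
move=> hn.
have hr := hab r.
set a := uphalf r in hn hr *; set b := r./2 in hr *.
have hba : b <= a /\ a <= b.+1.
  rewrite /a /b uphalf_half; case: (odd r) => /=; lia.
have -> : #|Acon n r| = \sum_(i < n) \sum_(j < n)
     (((i + j < a) || (2 * n <= i + j + b + 1)) : nat).
  rewrite -sum1_card big_mkcond /= pair_big /=; apply: eq_bigr => [[i j]] _.
  by rewrite inE /=; case: ifP.
have -> : \sum_(i < n) \sum_(j < n) (((i + j < a) || (2 * n <= i + j + b + 1)) : nat)
   = \sum_(i < n) (a - i) + \sum_(i < n) (i + b.+1 - n).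
  rewrite -big_split /=; apply: eq_bigr => i _.
  have hi := ltn_ord i.
  have -> : \sum_(j < n) (((i + j < a) || (2 * n <= i + j + b + 1)) : nat) =
      \sum_(j < n) ((j < a - i) : nat) + \sum_(j < n) ((2 * n - i - b - 1 <= j) : nat).
    rewrite -big_split /=; apply: eq_bigr => j _.
    by case: (ltnP j (a - i)) => ?; case: (leqP (2 * n) (i + j + b + 1)) => ?;
       case: (leqP (2 * n - i - b - 1) j) => ? /=; lia.
  rewrite sum_lt sum_ge; lia.
have t1 := @tri1 n a (ltnW hn).
have t2 := @tri2 n b (leq_ltn_trans (proj1 hba) hn).
move: t1 t2.
set S1 := \sum_(i < n) (a - i); set S2 := \sum_(i < n) (i + b.+1 - n).
move=> t1 t2.
case: hba => hb1 hb2.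
have [ab|ab] : a = b \/ a = b.+1 by lia.
- have -> : r.+1 ^ 2 = 4 * (b * b.+1) + 1 by rewrite -hr ab -mulnn; nia.
  lia.
- have -> : r.+1 ^ 2 = 4 * (b.+1 * b.+1) by rewrite -hr ab -mulnn; nia.
  lia.
Qed.

Definition gstep {n : nat} (r : nat) (G X : {set 'I_n * 'I_n}) : {set 'I_n * 'I_n} :=
  X :|: [set v in G | r <= #|nbhd (rook_adj n) v :&: X|].

Lemma gstep_sub n r (G A : {set 'I_n * 'I_n}) t :
  A \subset G -> iter t (gstep r G) A \subset G.
Proof.
move=> hA; elim: t => [|t IH] //=.
rewrite /gstep subUset IH /=.
by apply/subsetP => v; rewrite inE => /andP [].
Qed.

Lemma sim n (Rw Cl : {set 'I_n}) i0 j0 r (A : {set 'I_n * 'I_n}) t :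
  A \subset setX Rw Cl ->
  iter t (gstep r.+2 (setX Rw Cl)) A :&: setX (Rw :\ i0) (Cl :\ j0) \subset
  iter t (gstep r (setX (Rw :\ i0) (Cl :\ j0))) (A :&: setX (Rw :\ i0) (Cl :\ j0)).
Proof.
move=> hA.
set G' := setX (Rw :\ i0) (Cl :\ j0).
elim: t => [|t IH] /=; first exact: subxx.
set X := iter t _ A in IH *; set Y := iter t _ _ in IH *.
have XG : X \subset setX Rw Cl by apply: gstep_sub.
apply/subsetP => w; rewrite inE => /andP [Hw HwG'].
rewrite /gstep in_setU in Hw; case/orP: Hw => [HwX | ].
  by rewrite /gstep in_setU (subsetP IH) // inE HwX HwG'.
rewrite inE => /andP [HwG Hc].
rewrite /gstep in_setU; apply/orP; right; rewrite inE HwG' /=.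
case: w HwG' HwG Hc => wi wj HwG' HwG Hc.
have sub : nbhd (rook_adj n) (wi, wj) :&: X \subset
    (nbhd (rook_adj n) (wi, wj) :&: Y) :|: [set (i0, wj); (wi, j0)].
  apply/subsetP => [[x y]]; rewrite inE => /andP [hn hX].
  have := subsetP XG _ hX; rewrite in_setX /= => /andP [hx hy].
  have [hG'|hG'] := boolP ((x, y) \in G').
    by rewrite in_setU inE hn (subsetP IH) // inE hX hG'.
  move: hG' HwG'; rewrite /G' !in_setX /= !in_setD1 hx hy !andbT => hxy /andP [/andP [hwi _] /andP [hwj _]].
  move: hn; rewrite inE /rook_adj /= => hn.
  rewrite in_setU !inE; apply/orP; right.
  case/nandP: hxy => /negPn /eqP E; subst.
  - case/orP: hn => /andP [h1 h2]; last by rewrite h1 in hwi.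
    by rewrite (eqP h2) eqxx.
  - case/orP: hn => /andP [h1 h2]; first by rewrite h2 in hwj.
    by rewrite (eqP h1) eqxx orbT.
have := subset_leq_card sub.
have := cardsUI (nbhd (rook_adj n) (wi, wj) :&: Y) [set (i0, wj); (wi, j0)].
rewrite cards2.
move: Hc; set c1 := #|_ :&: X|; set c2 := #|_ :&: Y|.
set c3 := #|_ :|: _|; set c4 := #|_ :&: [set _; _]|.
case: (_ != _) => /=; lia.
Qed.

Lemma gstep_rec r : (r.+3 ^ 2) %/ 4 = (r.+1 ^ 2) %/ 4 + r.+2.
Proof. rewrite -!mulnn; lia. Qed.

Lemma sq_bound r : (r.+1 ^ 2) %/ 4 <= (uphalf r).+1 * (uphalf r).+1.
Proof.
rewrite uphalf_half.
have := odd_double_half r.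
case: (odd r) => /= h.
- have -> : r.+1 ^ 2 = 4 * (r./2.+1 * r./2.+1) by rewrite -h -mulnn; nia.
  rewrite mulKn //. nia.
- have -> : r.+1 ^ 2 = 4 * (r./2 * r./2.+1) + 1 by rewrite -h -mulnn; nia.
  have -> : (4 * (r./2 * r./2.+1) + 1) %/ 4 = r./2 * r./2.+1.
    lia.
  nia.
Qed.

Lemma LB n r : forall (Rw Cl : {set 'I_n}) (A : {set 'I_n * 'I_n}),
  uphalf r < #|Rw| -> uphalf r < #|Cl| -> A \subset setX Rw Cl ->
  (forall v, v \in setX Rw Cl -> exists t, v \in iter t (gstep r (setX Rw Cl)) A) ->
  (r.+1 ^ 2) %/ 4 <= #|A|.
Proof.
elim/ltn_ind: r => r IH Rw Cl A hR hC hA hP.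
set G := setX Rw Cl.
case: (boolP [exists v, [&& v \in G, v \notin A &
                              r <= #|nbhd (rook_adj n) v :&: A|]]).
- case/existsP => [[i0 j0]] /and3P [vG vA vc].
  have cA : #|nbhd (rook_adj n) (i0, j0) :&: A| <= #|A|.
    by apply: subset_leq_card; apply: subsetIr.
  move: IH hR hC hP vc; case: r => [|[|r']] IH hR hC hP vc //.
    by apply: leq_trans vc cA.
  set G' := setX (Rw :\ i0) (Cl :\ j0).
  move: vG; rewrite in_setX /= => /andP [hi0 hj0].
  have hR' := cardsD1 i0 Rw; have hC' := cardsD1 j0 Cl.
  rewrite hi0 in hR'; rewrite hj0 in hC'.
  have {}hR' : #|Rw| = #|Rw :\ i0|.+1 by rewrite hR'.
  have {}hC' : #|Cl| = #|Cl :\ j0|.+1 by rewrite hC'.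
  have IH' := IH r' (ltnW (ltnSn _)) (Rw :\ i0) (Cl :\ j0) (A :&: G').
  have h1 : (r'.+3 ^ 2) %/ 4 <= #|A :&: G'| + r'.+2.
    rewrite gstep_rec leq_add2r; apply: IH'.
    + by move: hR; rewrite /= hR'.
    + by move: hC; rewrite /= hC'.
    + exact: subsetIr.
    + move=> v vG'.
      have vG : v \in G.
        move: vG'; rewrite /G' /G !inE.
        by case/andP => /andP [_ ->] /andP [_ ->].
      have [t Ht] := hP v vG; exists t.
      by apply: (subsetP (@sim _ _ _ i0 j0 r' _ t hA)); rewrite inE Ht vG'.
  have h2 : nbhd (rook_adj n) (i0, j0) :&: A \subset A :\: G'.
    apply/subsetP => [[x y]]; rewrite !inE /rook_adj /= => /andP [hn ->].
    rewrite andbT negb_and; case/orP: hn => /andP [h1' h2'].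
      by rewrite (eqP h2') eqxx orbT.
    by rewrite (eqP h1') eqxx.
  apply: (leq_trans h1); rewrite -(cardsID G' A) leq_add2l.
  exact: leq_trans vc (subset_leq_card h2).
- move=> hn'.
  have hn : forall v, ~~ [&& v \in G, v \notin A &
                              r <= #|nbhd (rook_adj n) v :&: A|].
    move=> v; apply/negP => h; move/negP: hn'; apply; apply/existsP; by exists v.
  have fixA : gstep r G A = A.
    apply/setP => v; rewrite /gstep in_setU.
    case vA: (v \in A) => //=.
    rewrite inE; have := hn v; rewrite vA /=.
    exact: negbTE.
  have iterA : forall t, iter t (gstep r G) A = A.
    by elim=> //= t ->.
  have GA : G \subset A.
    by apply/subsetP => v vG; have [t] := hP v vG; rewrite iterA.
  have := subset_leq_card GA; rewrite cardsX => hc.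
  apply: leq_trans (sq_bound r) _.
  apply: leq_trans hc; exact: leq_mul.
Qed.

Theorem theorem2p1 (n r : nat) :
  (uphalf r).+1 <= n ->
  is_m_perc (rook_adj n) r ((r.+1 ^ 2) %/ 4).
Proof.
move=> hn; split.
  by exists (Acon n r); split; [exact: perc_con | exact: card_con].
move=> A0 HA.
apply: (@LB n r [set: 'I_n] [set: 'I_n]).
- by rewrite cardsT card_ord.
- by rewrite cardsT card_ord.
- by apply/subsetP => v _; rewrite !inE.
- move=> v _; have [t Ht] := HA v; exists t.
  suff -> : iter t (gstep r (setX [set: 'I_n] [set: 'I_n])) A0 =
            bp_iter (rook_adj n) r t A0 by [].
  rewrite /bp_iter; apply: eq_iter => X.
  apply/setP => u; rewrite /gstep /bp_step !in_setU !inE.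
  by [].
Qed.
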